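(* Let $S\subseteq[n]$. A matrix $\Delta\in\mathbb{R}^{n\times n}$ with $\Delta e_j=0$ for all $j\notin S$ is a Nash equilibrium for $(M,\Gamma,\Sigma,S)$ if and only if its columns $\delta_k=\Delta e_k$, $k\in S$, solve the system of $n|S|$ linear equations $$T^{(k,k)}\delta_k+\sum_{j\in S,\ j\neq k}T^{(k,j)}\delta_j=y_k\qquad\text{for all }k\in S.$$
   Context: Fix agents $[n]=\{1,\dots,n\}$. Let $\Sigma\in\mathbb{R}^{n\times n}$ be symmetric positive definite, $\Gamma=\mathrm{diag}(\gamma_1,\dots,\gamma_n)$ with all $\gamma_i>0$, and let $M\in\mathbb{R}^{n\times n}$ be the matrix of true beliefs with $i$-th column $\mu_i=Me_i$. For a matrix of reported negotiating positions $M'\in\mathbb{R}^{n\times n}$, the stable point for $M'$ is the unique pair $(W,P)$ of real $n\times n$ matrices with $W=W^T$, $P^T=-P$ and $M'-P=2\Sigma W\Gamma$; equivalently $\mathrm{vec}(W)=\tfrac12(\Gamma\otimes\Sigma+\Sigma\otimes\Gamma)^{-1}\mathrm{vec}(M'+M'^T)$ and $P=M'-2\Sigma W\Gamma$. Here $\mathrm{vec}$ stacks columns and $e_i$ is the $i$-th standard basis vector. Agent $i$'s (true) utility at $(W,P)$ is $g_i(W,P)=w_i^T(\mu_i-Pe_i)-\gamma_i\, w_i^T\Sigma w_i$, where $w_i=We_i$. $S\subseteq[n]$ is the set of strategic agents; honest agents $i\notin S$ report $\mu_i'=\mu_i$. A Nash equilibrium for $(M,\Gamma,\Sigma,S)$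 is a matrix $\Delta$ with $\Delta e_j=0$ for $j\notin S$ such that for each $k\in S$, when every $j\in S\setminus\{k\}$ reports $(M+\Delta)e_j$, agent $k$'s utility at the stable point is maximized (over all reports $\mu_k'\in\mathbb{R}^n$) by reporting $(M+\Delta)e_k$. Matrices: $\Pi\in\mathbb{R}^{n^2\times n^2}$ is the commutation matrix, $\Pi\,\mathrm{vec}(X)=\mathrm{vec}(X^T)$; $\Pi_k\in\mathbb{R}^{n\times n^2}$ satisfies $\Pi_k\mathrm{vec}(X)=Xe_k$. For $Z\in\mathbb{R}^{n^2\times n^2}$, $Z^{(p,q)}$ is its $n\times n$ block in block-row $p$ and block-column $q$. Set $K=\Gamma\otimes\Sigma+\Sigma\otimes\Gamma$, $L=\tfrac12(K^{-1}+K^{-1}\Pi)$, $T^{(k,k)}=L^{(k,k)}+(L^{(k,k)})^T-2\gamma_k(L^{(k,k)})^T\Sigma L^{(k,k)}$, $T^{(k,j)}=(I-2\gamma_k(L^{(k,k)})^T\Sigma)L^{(k,j)}$ for $j\neq k$, and $y_k=\tfrac12\big(2\gamma_k(L^{(k,k)})^T\Sigma-I\big)\Pi_kK^{-1}\mathrm{vec}(M+M^T)$. *)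

(* Defs.v *)
From mathcomp Require Import all_boot all_order all_algebra.
Set Implicit Arguments. Unset Strict Implicit. Unset Printing Implicit Defensive.
Import Order.TTheory GRing.Theory Num.Theory.
Local Open Scope ring_scope.

Section Defs.
Variables (R : realFieldType) (n : nat).

(* Index convention: the entry (i,j) of an n x n matrix X sits at position
   mxvec_index j i (= j*n + i) of vec X, i.e. vec stacks columns. *)

Definition vec (X : 'M[R]_n) : 'cV[R]_(n * n) := (mxvec X^T)^T.
Definition unvec (v : 'cV[R]_(n * n)) : 'M[R]_n := (vec_mx v^T)^T.

(* Kronecker product A (x) B : block (p,q) is A p q *: B *)
Definition kron (A B : 'M[R]_n) : 'M[R]_(n * n) :=
  \sum_(p < n) \sum_(q < n) \sum_(i < n) \sum_(j < n)
     (A p q * B i j) *: delta_mx (mxvec_index p i) (mxvec_index q j).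

(* commutation matrix: Pi *m vec X = vec X^T *)
Definition commPi : 'M[R]_(n * n) :=
  \sum_(a < n) \sum_(b < n) delta_mx (mxvec_index a b) (mxvec_index b a).

(* Pi_k : Pi_k *m vec X = X *m e_k (the k-th column of X) *)
Definition commPik (k : 'I_n) : 'M[R]_(n, n * n) :=
  \sum_(i < n) delta_mx i (mxvec_index k i).

Definition blk (Z : 'M[R]_(n * n)) (p q : 'I_n) : 'M[R]_n :=
  \matrix_(a, b) Z (mxvec_index p a) (mxvec_index q b).

Definition ev (i : 'I_n) : 'cV[R]_n := delta_mx i 0.

Variables (Sigma : 'M[R]_n) (gamma : 'I_n -> R).

Definition Gam : 'M[R]_n := diag_mx (\row_i gamma i).

Definition Kmx : 'M[R]_(n * n) := kron Gam Sigma + kron Sigma Gam.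

Definition Lmx : 'M[R]_(n * n) := 2^-1 *: (invmx Kmx + invmx Kmx *m commPi).

(* the stable point (W,P) for reported positions M' *)
Definition stableW (M' : 'M[R]_n) : 'M[R]_n :=
  unvec (2^-1 *: (invmx Kmx *m vec (M' + M'^T))).
Definition stableP (M' : 'M[R]_n) : 'M[R]_n :=
  M' - 2%:R *: (Sigma *m stableW M' *m Gam).

(* true utility of agent i, mu_i = M e_i *)
Definition utility (M : 'M[R]_n) (i : 'I_n) (W P : 'M[R]_n) : R :=
  let w := W *m ev i in
  ((w^T *m (M *m ev i - P *m ev i)) 0 0)
  - gamma i * ((w^T *m Sigma *m w) 0 0).

Definition set_col (A : 'M[R]_n) (k : 'I_n) (v : 'cV[R]_n) : 'M[R]_n :=
  \matrix_(a, b) (if b == k then v a 0 else A a b).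

Definition util_at (M : 'M[R]_n) (i : 'I_n) (M' : 'M[R]_n) : R :=
  utility M i (stableW M') (stableP M').

Definition NashEq (M : 'M[R]_n) (S : {set 'I_n}) (Delta : 'M[R]_n) : Prop :=
  (forall j, j \notin S -> Delta *m ev j = 0) /\
  forall k, k \in S -> forall mu' : 'cV[R]_n,
    util_at M k (set_col (M + Delta) k mu') <= util_at M k (M + Delta).

Definition Tblk (k j : 'I_n) : 'M[R]_n :=
  if j == k then
    blk Lmx k k + (blk Lmx k k)^T
      - (2%:R * gamma k) *: ((blk Lmx k k)^T *m Sigma *m blk Lmx k k)
  else (1%:M - (2%:R * gamma k) *: ((blk Lmx k k)^T *m Sigma)) *m blk Lmx k j.

Definition yvec (M : 'M[R]_n) (k : 'I_n) : 'cV[R]_n :=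
  2^-1 *: (((2%:R * gamma k) *: ((blk Lmx k k)^T *m Sigma) - 1%:M)
             *m commPik k *m invmx Kmx *m vec (M + M^T)).

End Defs.
Arguments ev {R n}.

(* Main.v *)
Require Import Defs.
From mathcomp Require Import all_boot all_order all_algebra.
From mathcomp Require Import ring lra.
Import Order.TTheory GRing.Theory Num.Theory.
Local Open Scope ring_scope.
Section S.
Variables (R : realFieldType) (n : nat).
Lemma sum_idx (F : 'I_(n*n) -> R) :
  \sum_(l < n * n) F l = \sum_(q < n) \sum_(b < n) F (mxvec_index q b).
Proof.
rewrite pair_big /= (reindex _ (curry_mxvec_bij n n)) /=.
by apply: eq_bigr => -[q b].
Qed.
Lemma idx_eq (p q a b : 'I_n) :
  (mxvec_index p a == mxvec_index q b) = (p == q) && (a == b).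
Proof.
apply/eqP/andP => [H|[/eqP-> /eqP->]] //.
by move: H => /cast_ord_inj/enum_rank_inj [-> ->].
Qed.
Lemma vecE (X : 'M[R]_n) q b : vec X (mxvec_index q b) 0 = X b q.
Proof. by rewrite /vec mxE mxvecE mxE. Qed.

Lemma cV_idx_ext (u v : 'cV[R]_(n*n)) :
  (forall p a, u (mxvec_index p a) 0 = v (mxvec_index p a) 0) -> u = v.
Proof.
move=> H; apply/matrixP => i j; rewrite [j]ord1.
by case/mxvec_indexP: i => p a; apply: H.
Qed.

Lemma mulvecE (Z : 'M[R]_(n*n)) (X : 'M[R]_n) p a :
  (Z *m vec X) (mxvec_index p a) 0 =
  \sum_(q < n) \sum_(b < n) Z (mxvec_index p a) (mxvec_index q b) * X b q.
Proof.
rewrite mxE sum_idx; apply: eq_bigr => q _; apply: eq_bigr => b _.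
by rewrite vecE.
Qed.

Lemma kronE (A B : 'M[R]_n) p i q j :
  kron A B (mxvec_index p i) (mxvec_index q j) = A p q * B i j.
Proof.
rewrite /kron summxE (bigD1 p) //= summxE (bigD1 q) //= summxE (bigD1 i) //=.
rewrite summxE (bigD1 j) //= !mxE !eqxx mulr1.
rewrite big1 ?addr0; last first.
  move=> j' hj; rewrite !mxE !idx_eq !eqxx [j == j']eq_sym (negPf hj).
  by rewrite mulr0.
rewrite big1 ?addr0; last first.
  move=> i' hi; rewrite summxE big1 // => j' _.
  by rewrite !mxE !idx_eq [i == i']eq_sym (negPf hi) andbF /= mulr0.
rewrite big1 ?addr0; last first.
  move=> q' hq; rewrite summxE big1 // => i' _; rewrite summxE big1 // => j' _.
  by rewrite !mxE !idx_eq [q == q']eq_sym (negPf hq) /= andbF mulr0.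
rewrite big1 ?addr0 //.
move=> p' hp; rewrite summxE big1 // => q' _; rewrite summxE big1 // => i' _.
rewrite summxE big1 // => j' _.
by rewrite !mxE !idx_eq [p == p']eq_sym (negPf hp) /= mulr0.
Qed.

Lemma kron_vec (A B X : 'M[R]_n) : kron A B *m vec X = vec (B *m X *m A^T).
Proof.
apply: cV_idx_ext => p a; rewrite mulvecE vecE !mxE.
under eq_bigr => q _ do under eq_bigr => b _ do rewrite kronE.
apply: eq_bigr => q _; rewrite !mxE big_distrl /=.
apply: eq_bigr => b _; rewrite ?mxE; ring.
Qed.
Lemma sum2_1 (F : 'I_n -> 'I_n -> R) a0 b0 :
  (forall a b, (a != a0) || (b != b0) -> F a b = 0) ->
  \sum_(a < n) \sum_(b < n) F a b = F a0 b0.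
Proof.
move=> H; rewrite (bigD1 a0) //= (bigD1 b0) //= big1 ?addr0; last first.
  by move=> b hb; apply: H; rewrite hb orbT.
rewrite big1 ?addr0 // => a ha; apply: big1 => b _; apply: H; by rewrite ha.
Qed.

Lemma sum1_1 (V : nmodType) (F : 'I_n -> V) a0 :
  (forall a, a != a0 -> F a = 0) -> \sum_(a < n) F a = F a0.
Proof.
move=> H; rewrite (bigD1 a0) //= big1 ?addr0 // => a ha; exact: H.
Qed.

Lemma commPiE p a q b :
  commPi R n (mxvec_index p a) (mxvec_index q b) = ((p == b) && (a == q))%:R.
Proof.
rewrite /commPi summxE.
under eq_bigr => a' _ do rewrite summxE.
rewrite (@sum2_1 _ p a).
  by rewrite !mxE !eqxx !idx_eq /= andbC [q == a]eq_sym [b == p]eq_sym.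
move=> a' b' H; rewrite !mxE idx_eq.
by case/orP: H => /negPf H; rewrite [p == a']eq_sym ?[a == b']eq_sym H ?andbF.
Qed.

Lemma commPi_vec (X : 'M[R]_n) : commPi R n *m vec X = vec X^T.
Proof.
apply: cV_idx_ext => p a; rewrite mulvecE vecE mxE.
rewrite (@sum2_1 _ a p); first by rewrite commPiE !eqxx mul1r.
move=> q b H; rewrite commPiE.
by case/orP: H => /negPf H; rewrite [p == b]eq_sym ?[a == q]eq_sym H ?andbF mul0r.
Qed.

Lemma commPikE k i q b :
  @commPik R n k i (mxvec_index q b) = ((q == k) && (b == i))%:R.
Proof.
rewrite /commPik summxE (@sum1_1 _ _ i).
  by rewrite !mxE eqxx idx_eq.
by move=> i' hi; rewrite !mxE [i == i']eq_sym (negPf hi).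
Qed.

Lemma commPik_mul k (v : 'cV[R]_(n*n)) :
  @commPik R n k *m v = \col_a v (mxvec_index k a) 0.
Proof.
apply/matrixP => a j; rewrite [j]ord1 !mxE sum_idx (@sum2_1 _ k a).
  by rewrite commPikE !eqxx mul1r.
move=> q b H; rewrite commPikE.
by case/orP: H => /negPf H; rewrite ?[a == b]eq_sym H ?andbF mul0r.
Qed.

Lemma commPik_vec k (X : 'M[R]_n) : @commPik R n k *m vec X = X *m ev k.
Proof.
rewrite commPik_mul; apply/matrixP => a j; rewrite [j]ord1 mxE. rewrite vecE.
rewrite mxE (@sum1_1 _ _ k) ?mxE ?eqxx ?mulr1 // => b hb.
by rewrite mxE (negPf hb) mulr0.
Qed.
Lemma mul_evE (A : 'M[R]_n) q b : (A *m ev q) b 0 = A b q.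
Proof.
by rewrite mxE (@sum1_1 _ _ q) ?mxE ?eqxx ?mulr1 // => c hc; rewrite mxE (negPf hc) mulr0.
Qed.

Lemma vecD (X Y : 'M[R]_n) : vec (X + Y) = vec X + vec Y.
Proof. by apply: cV_idx_ext => p a; rewrite vecE [RHS]mxE !vecE mxE. Qed.
Lemma vecZ c (X : 'M[R]_n) : vec (c *: X) = c *: vec X.
Proof. by apply: cV_idx_ext => p a; rewrite vecE [RHS]mxE vecE mxE. Qed.
Lemma vecN (X : 'M[R]_n) : vec (- X) = - vec X.
Proof. by apply: cV_idx_ext => p a; rewrite vecE [RHS]mxE vecE mxE. Qed.
Lemma vecB (X Y : 'M[R]_n) : vec (X - Y) = vec X - vec Y.
Proof. by rewrite vecD vecN. Qed.

Lemma unvecK (X : 'M[R]_n) : unvec (vec X) = X.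
Proof. by rewrite /unvec /vec trmxK mxvecK trmxK. Qed.
Lemma vecK (v : 'cV[R]_(n*n)) : vec (unvec v) = v.
Proof. by rewrite /unvec /vec trmxK vec_mxK trmxK. Qed.
Lemma vec_inj (X Y : 'M[R]_n) : vec X = vec Y -> X = Y.
Proof. by move=> H; rewrite -(unvecK X) H unvecK. Qed.

Lemma blk_mul (Z : 'M[R]_(n*n)) p (X : 'M[R]_n) :
  @commPik R n p *m (Z *m vec X) = \sum_(q < n) blk Z p q *m (X *m ev q).
Proof.
rewrite commPik_mul; apply/matrixP => a j; rewrite [j]ord1 mxE mulvecE summxE.
apply: eq_bigr => q _; rewrite mxE; apply: eq_bigr => b _.
by rewrite mul_evE mxE.
Qed.

Definition dot (u v : 'cV[R]_n) : R := (u^T *m v) 0 0.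

Lemma dotC u v : dot u v = dot v u.
Proof. by rewrite /dot -[v^T *m u]trmxK trmx_mul !trmxK [RHS]mxE. Qed.
Lemma dot_mul u (A : 'M[R]_n) v : dot u (A *m v) = dot (A^T *m u) v.
Proof. by rewrite /dot trmx_mul trmxK mulmxA. Qed.
Lemma dotDr u v w : dot u (v + w) = dot u v + dot u w.
Proof. by rewrite /dot mulmxDr mxE. Qed.
Lemma dotDl u v w : dot (v + w) u = dot v u + dot w u.
Proof. by rewrite dotC dotDr !(dotC u). Qed.
Lemma dotNr u v : dot u (- v) = - dot u v.
Proof. by rewrite /dot mulmxN mxE. Qed.
Lemma dotNl u v : dot (- v) u = - dot v u.
Proof. by rewrite dotC dotNr dotC. Qed.
Lemma dotBr u v w : dot u (v - w) = dot u v - dot u w.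
Proof. by rewrite dotDr dotNr. Qed.
Lemma dotBl u v w : dot (v - w) u = dot v u - dot w u.
Proof. by rewrite dotDl dotNl. Qed.
Lemma dotZr c u v : dot u (c *: v) = c * dot u v.
Proof. by rewrite /dot -scalemxAr mxE. Qed.
Lemma dotZl c u v : dot (c *: v) u = c * dot v u.
Proof. by rewrite dotC dotZr dotC. Qed.
Lemma dot0r u : dot u 0 = 0.
Proof. by rewrite /dot mulmx0 mxE. Qed.

Lemma dot_ge0 v : 0 <= dot v v.
Proof.
rewrite /dot mxE; apply: sumr_ge0 => i _; rewrite mxE; exact: sqr_ge0.
Qed.
Lemma dot_eq0 v : dot v v = 0 -> v = 0.
Proof.
move=> H; apply/matrixP => i j; rewrite [j]ord1 mxE.
have H' : \sum_(k < n) v k 0 ^+ 2 = 0.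
  rewrite -[RHS]H /dot mxE; apply: eq_bigr => k _; by rewrite mxE expr2.
have := psumr_eq0P (fun k _ => sqr_ge0 (v k 0)) H'.
by move=> /(_ i isT) /eqP; rewrite sqrf_eq0 => /eqP.
Qed.

Lemma sum2_eq0 (x y : R) : 0 <= x -> 0 <= y -> x + y = 0 -> x = 0.
Proof. move=> hx hy hxy; lra. Qed.

Lemma dot_sym (Sg : 'M[R]_n) u v : Sg^T = Sg -> dot u (Sg *m v) = dot v (Sg *m u).
Proof. by move=> HS; rewrite dot_mul HS dotC. Qed.

Lemma quad_opt (A Sg : 'M[R]_n) (g : R) (c mu x0 : 'cV[R]_n) :
  Sg^T = Sg ->
  (forall x, 0 <= dot x ((A + A^T - (2%:R * g) *: (A^T *m Sg *m A)) *m x)) ->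
  let f x := dot (A *m x + c) (mu - x) + g * dot (A *m x + c) (Sg *m (A *m x + c)) in
  (forall x, f x <= f x0) <->
  (A + A^T - (2%:R * g) *: (A^T *m Sg *m A)) *m x0
    + (1%:M - (2%:R * g) *: (A^T *m Sg)) *m c = A^T *m mu.
Proof.
move=> HS Hpsd f.
set H := (A + A^T - _).
set y := A *m x0 + c.
set gv := A^T *m (mu - x0) - y + (2%:R * g) *: (A^T *m (Sg *m y)).
have Egv : gv = A^T *m mu - (H *m x0 + (1%:M - (2%:R * g) *: (A^T *m Sg)) *m c).
  rewrite /gv /y /H !mulmxDl ?mulNmx !mulmxDr ?mulmxN -!scalemxAl !mul1mx -!mulmxA.
  apply/matrixP => i j; rewrite !mxE; ring.
pose q d := dot (A *m d) d - g * dot (A *m d) (Sg *m (A *m d)).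
have keyH : forall d, dot d (H *m d) = 2%:R * q d.
  move=> d; rewrite /H /q !mulmxDl ?mulNmx -!scalemxAl -!mulmxA dotBr dotDr dotZr.
  rewrite [dot d (A^T *m _)]dot_mul [dot d (A^T *m (Sg *m _))]dot_mul trmxK (dotC d).
  ring.
have key : forall d, f (x0 + d) = f x0 + dot d gv - q d.
  move=> d; rewrite /f /q /gv.
  have -> : A *m (x0 + d) + c = y + A *m d by rewrite mulmxDr /y addrAC.
  have -> : mu - (x0 + d) = (mu - x0) - d by rewrite opprD addrA.
  rewrite -/y mulmxDr !dotDl !dotDr ?dotNr !dotZr.
  rewrite [dot d (A^T *m (mu - x0))]dot_mul [dot d (A^T *m (Sg *m y))]dot_mul trmxK.
  rewrite /y !mulmxDr !dotDr ?dotDl ?dotBr.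
  rewrite (dot_sym Sg (A *m x0) (A *m d) HS) (dot_sym Sg c (A *m d) HS) (dotC d (A *m x0)) (dotC d c).
  rewrite ?dotNr. ring.
split => [Hmax|Heq].
  apply/eqP; rewrite eq_sym -subr_eq0 -Egv; apply/eqP.
  have hq : 0 <= q gv.
    have := Hpsd gv; rewrite keyH => h; rewrite -(@pmulr_rge0 _ 2%:R) //.
  set a := dot gv gv.
  have ha : 0 <= a by exact: dot_ge0.
  apply: dot_eq0; rewrite -/a.
  apply/eqP; rewrite eq_le ha andbT; apply/negP => /negP; rewrite -ltNge => apos.
  set t := a / (q gv + 1).
  have qt : q (t *: gv) = t * t * q gv.
    by rewrite /q -scalemxAr dotZl dotZr -scalemxAr dotZl dotZr; ring.
  have := Hmax (x0 + t *: gv); rewrite key qt dotZl -/a => h1.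
  have hq1 : 0 < q gv + 1 by lra.
  have tq : t * (q gv + 1) = a by rewrite /t divfK // gt_eqF.
  have tpos : 0 < t by rewrite /t divr_gt0.
  have h2 : a <= t * q gv.
    rewrite -(ler_pM2l tpos); lra.
  have h3 : a * (q gv + 1) <= (t * q gv) * (q gv + 1) by rewrite ler_pM2r.
  have e : t * q gv * (q gv + 1) = q gv * a by rewrite -tq; ring.
  rewrite e mulrDr mulr1 [q gv * a]mulrC gerDl in h3.
  by move: apos; rewrite ltNge h3.
move=> x; have -> : x = x0 + (x - x0) by rewrite addrC subrK.
rewrite key.
have -> : gv = 0 by rewrite Egv Heq subrr.
rewrite dot0r addr0 lerBlDr lerDl.
have := Hpsd (x - x0); rewrite keyH; nra.
Qed.
End S.

Section Main.
Variables (R : realFieldType) (n : nat) (Sigma : 'M[R]_n) (gamma : 'I_n -> R).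
Hypothesis HS : Sigma^T = Sigma.
Hypothesis HPD : forall x : 'cV[R]_n, x != 0 -> 0 < (x^T *m Sigma *m x) 0 0.
Hypothesis Hg : forall i, 0 < gamma i.

Local Notation G := (Gam gamma).
Local Notation K := (Kmx Sigma gamma).
Local Notation L := (Lmx Sigma gamma).
Local Notation W := (stableW Sigma gamma).
Local Notation dot := (@dot R n).

Lemma psd y : 0 <= dot y (Sigma *m y).
Proof.
rewrite /dot mulmxA; have [->|nz] := eqVneq y 0; last by apply: ltW; apply: HPD.
by rewrite mulmx0 mxE.
Qed.

Lemma psd0 y : dot y (Sigma *m y) = 0 -> y = 0.
Proof.
rewrite /dot mulmxA => H; apply/eqP; apply/negP => /negP nz.
by have := HPD _ nz; rewrite H ltxx.
Qed.

Lemma Gtr : G^T = G.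
Proof. exact: tr_diag_mx. Qed.

Lemma Gev k : G *m ev k = gamma k *: ev k.
Proof.
rewrite mul_diag_mx; apply/matrixP => i j; rewrite !mxE.
by have [->|ne] := eqVneq i k; rewrite ?mulr1 ?mulr0.
Qed.

Lemma trG (Z : 'M[R]_n) : \tr (G *m Z) = \sum_i gamma i * Z i i.
Proof. by rewrite mul_diag_mx /mxtrace; apply: eq_bigr => i _; rewrite !mxE. Qed.

Lemma evE (Z : 'M[R]_n) i j : ((ev i)^T *m Z *m ev j) 0 0 = Z i j.
Proof.
rewrite -mulmxA mxE (@sum1_1 _ _ _ i) ?mul_evE ?mxE ?eqxx ?mul1r // => c hc.
by rewrite !mxE (negPf hc) mul0r.
Qed.

Lemma Zii (V : 'M[R]_n) i :
  (V^T *m Sigma *m V) i i = dot (V *m ev i) (Sigma *m (V *m ev i)).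
Proof. by rewrite /dot trmx_mul !mulmxA -(mulmxA _ V^T) -(mulmxA _ (V^T *m Sigma)) evE. Qed.

Lemma trGV (V : 'M[R]_n) :
  \tr (G *m (V^T *m Sigma *m V)) =
  \sum_i gamma i * dot (V *m ev i) (Sigma *m (V *m ev i)).
Proof. by rewrite trG; apply: eq_bigr => i _; rewrite Zii. Qed.

Lemma trGV_ge (V : 'M[R]_n) k :
  gamma k * dot (V *m ev k) (Sigma *m (V *m ev k)) <= \tr (G *m (V^T *m Sigma *m V)).
Proof.
rewrite trGV (bigD1 k) //= lerDl; apply: sumr_ge0 => i _.
by apply: mulr_ge0; [apply: ltW | apply: psd].
Qed.

Lemma trGV_ge0 (V : 'M[R]_n) : 0 <= \tr (G *m (V^T *m Sigma *m V)).
Proof.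
rewrite trGV; apply: sumr_ge0 => i _.
by apply: mulr_ge0; [apply: ltW | apply: psd].
Qed.

Lemma vec0 : vec (0 : 'M[R]_n) = 0.
Proof. by apply: cV_idx_ext => p a; rewrite vecE !mxE. Qed.

Lemma K_vec V : K *m vec V = vec (Sigma *m V *m G + G *m V *m Sigma).
Proof. by rewrite /Kmx mulmxDl !kron_vec Gtr HS vecD. Qed.

Lemma K_unit : K \in unitmx.
Proof.
rewrite -unitmx_tr unitmxE unitfE; apply/negP => /det0P [v nz0 vK].
have Kv : K *m v^T = 0 by rewrite -[K]trmxK -trmx_mul vK trmx0.
set V := unvec v^T.
have hV : Sigma *m V *m G + G *m V *m Sigma = 0.
  by apply: vec_inj; rewrite -K_vec vecK Kv vec0.
have T0 : \tr (G *m (V^T *m Sigma *m V)) + \tr (G *m (V^T^T *m Sigma *m V^T)) = 0.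
  have := congr1 (fun Z => \tr (V^T *m Z)) hV; rewrite /= mulmx0 mxtrace0 mulmxDr mxtraceD.
  rewrite !mulmxA mxtrace_mulC !mulmxA => <-; congr (_ + _).
  rewrite trmxK -[V^T *m G *m V *m Sigma]mulmxA mxtrace_mulC !mulmxA.
  by rewrite mxtrace_mulC !mulmxA.
have T1 : \tr (G *m (V^T *m Sigma *m V)) = 0.
  exact: (@sum2_eq0 _ _ _ (trGV_ge0 V) (trGV_ge0 V^T) T0).
rewrite trGV in T1.
have Vi : forall i, V *m ev i = 0.
  move=> i; apply: psd0.
  have hnn : forall j : 'I_n, true -> 0 <= gamma j * dot (V *m ev j) (Sigma *m (V *m ev j)).
    by move=> j _; apply: mulr_ge0; [apply: ltW | apply: psd].
  by have := psumr_eq0P hnn T1 => /(_ i isT) /eqP; rewrite mulf_eq0 gt_eqF //= => /eqP.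
have V0 : V = 0.
  by apply/matrixP => a b; rewrite -(@mul_evE _ _ V b a) Vi !mxE.
by move/eqP: nz0; apply; rewrite -[v]trmxK -(@vecK _ _ v^T) -/V V0 vec0 trmx0.
Qed.

Lemma vecW X : vec (W X) = L *m vec X.
Proof.
rewrite /stableW vecK /Lmx vecD -commPi_vec -!scalemxAl mulmxDl mulmxDr mulmxA.
by [].
Qed.

Lemma Wcol X k : W X *m ev k = \sum_(q < n) blk L k q *m (X *m ev q).
Proof. by rewrite -commPik_vec vecW blk_mul. Qed.

Lemma W_lyap X : Sigma *m W X *m G + G *m W X *m Sigma = 2^-1 *: (X + X^T).
Proof.
apply: vec_inj; rewrite -K_vec /stableW vecK -scalemxAr mulmxA mulmxV ?K_unit //.
by rewrite mul1mx vecZ.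
Qed.

Lemma W_sym X : (W X)^T = W X.
Proof.
apply: vec_inj; apply: (can_inj (mulKmx K_unit)).
rewrite !K_vec; congr vec.
have E : Sigma *m (W X)^T *m G + G *m (W X)^T *m Sigma
         = (Sigma *m W X *m G + G *m W X *m Sigma)^T.
  by rewrite [RHS]linearD /= !trmx_mul !trmxK Gtr HS !mulmxA addrC.
by rewrite E W_lyap linearZ /= linearD /= trmxK addrC.
Qed.

Lemma tr11 (Z : 'M[R]_1) : \tr Z = Z 0 0.
Proof. by rewrite /mxtrace big_ord1. Qed.

Lemma concave k x :
  0 <= dot x ((blk L k k + (blk L k k)^T
     - (2%:R * gamma k) *: ((blk L k k)^T *m Sigma *m blk L k k)) *m x).
Proof.
set A := blk L k k.
set X := x *m (ev k)^T.
have hXq : forall q, X *m ev q = if q == k then x else 0.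
  move=> q; rewrite /X -mulmxA; apply/matrixP => a j; rewrite [j]ord1.
  rewrite mxE big_ord1 -[(ev k)^T]mulmx1 evE mxE.
  by rewrite eq_sym; case: eqP => _; rewrite ?mulr1 ?mulr0 ?mxE.

set w := W X *m ev k.
have wA : w = A *m x.
  rewrite /w Wcol (bigD1 k) //= hXq eqxx big1 ?addr0 // => q hq.
  by rewrite hXq (negPf hq) mulmx0.
have h1 : dot x w = \tr (X^T *m W X).
  rewrite /X trmx_mul trmxK -mulmxA mxtrace_mulC tr11 /dot mulmxA //.
have h2 : \tr (X *m W X) = \tr (X^T *m W X).
  by rewrite -mxtrace_tr trmx_mul W_sym mxtrace_mulC.
have h3 : \tr (X^T *m W X) = \tr ((Sigma *m W X *m G + G *m W X *m Sigma) *m W X).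
  rewrite W_lyap -scalemxAl mxtraceZ mulmxDl mxtraceD h2; by field.
have h4 : \tr ((Sigma *m W X *m G + G *m W X *m Sigma) *m W X)
          = 2%:R * \tr (G *m ((W X)^T *m Sigma *m W X)).
  rewrite mulmxDl mxtraceD W_sym -!mulmxA mxtrace_mulC -!mulmxA.
  rewrite [\tr (W X *m _)]mxtrace_mulC -!mulmxA; ring.
have hge := trGV_ge (W X) k; rewrite -/w in hge.
have hq := psd w.
have hg := Hg k.
rewrite !mulmxDl ?mulNmx -!scalemxAl -!mulmxA dotBr dotDr dotZr.
rewrite [dot x (A^T *m _)]dot_mul [dot x (A^T *m (Sigma *m _))]dot_mul trmxK (@dotC _ _ x).
rewrite -wA (@dotC _ _ w x) h1 h3 h4.
nra.
Qed.

Lemma set_col_ev (A : 'M[R]_n) k v q :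
  set_col A k v *m ev q = if q == k then v else A *m ev q.
Proof.
apply/matrixP => a j; rewrite [j]ord1 mul_evE mxE.
by case: eqP => _ //; rewrite mul_evE.
Qed.

Lemma set_col_id (A : 'M[R]_n) k : set_col A k (A *m ev k) = A.
Proof.
apply/matrixP => a b; rewrite mxE; case: eqP => [->|_] //.
by rewrite mul_evE.
Qed.

Lemma Pcol X k : stableP Sigma gamma X *m ev k
  = X *m ev k - (2%:R * gamma k) *: (Sigma *m (W X *m ev k)).
Proof.
rewrite /stableP mulmxBl -!scalemxAl -!mulmxA Gev -!scalemxAr scalerA.
by [].
Qed.

Lemma util_form M M' k :
  util_at Sigma gamma M k M' =
  dot (W M' *m ev k) (M *m ev k - M' *m ev k)
  + gamma k * dot (W M' *m ev k) (Sigma *m (W M' *m ev k)).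
Proof.
rewrite /util_at /utility Pcol -/W -mulmxA.
rewrite -[((_)^T *m (M *m ev k - _)) 0 0]/(dot _ _).
rewrite -[((_)^T *m (Sigma *m _)) 0 0]/(dot _ _).
rewrite !dotBr dotZr; ring.
Qed.

Lemma agent_equiv M M0 k :
  (forall mu', util_at Sigma gamma M k (set_col M0 k mu') <= util_at Sigma gamma M k M0) <->
  Tblk Sigma gamma k k *m (M0 *m ev k)
  + (1%:M - (2%:R * gamma k) *: ((blk L k k)^T *m Sigma))
      *m (\sum_(q < n | q != k) blk L k q *m (M0 *m ev q))
  = (blk L k k)^T *m (M *m ev k).
Proof.
set A := blk L k k.
set c := \sum_(q < n | q != k) _.
have Hw : forall M', (forall q, q != k -> M' *m ev q = M0 *m ev q) ->
    W M' *m ev k = A *m (M' *m ev k) + c.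
  move=> M' HM; rewrite Wcol (bigD1 k) //=; congr (_ + _).
  by apply: eq_bigr => q hq; rewrite HM.
have Hset : forall mu', forall q, q != k -> set_col M0 k mu' *m ev q = M0 *m ev q.
  by move=> mu' q hq; rewrite set_col_ev (negPf hq).
have := @quad_opt R n A Sigma (gamma k) c (M *m ev k) (M0 *m ev k) HS (concave k).
rewrite /Tblk eqxx /= => <-.
split => H x.
  have := H x; rewrite !util_form (Hw _ (Hset x)) set_col_ev eqxx.
  by rewrite (Hw M0) //.
rewrite !util_form (Hw _ (Hset x)) set_col_ev eqxx (Hw M0) //; exact: H.
Qed.

Lemma yvec_eq M k : yvec Sigma gamma M k =
  - ((1%:M - (2%:R * gamma k) *: ((blk L k k)^T *m Sigma))
       *m \sum_(q < n) blk L k q *m (M *m ev q)).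
Proof.
have e : invmx K *m vec (M + M^T) = 2%:R *: vec (W M).
  by rewrite /stableW vecK scalerA divff ?scale1r // pnatr_eq0.
rewrite /yvec -!mulmxA e -!scalemxAr commPik_vec scalerA mulVf ?pnatr_eq0 // scale1r.
by rewrite Wcol -mulNmx opprB.
Qed.

Lemma eq_shift (x y x' y' : 'cV[R]_n) : x - y = x' - y' -> (x = y <-> x' = y').
Proof.
move=> E; split => H0; apply/eqP; rewrite -subr_eq0.
  by rewrite -E H0 subrr.
by rewrite E H0 subrr.
Qed.

Lemma sys_equiv M Delta (S : {set 'I_n}) k :
  (forall j, j \notin S -> Delta *m ev j = 0) -> k \in S ->
  (Tblk Sigma gamma k k *m ((M + Delta) *m ev k)
   + (1%:M - (2%:R * gamma k) *: ((blk L k k)^T *m Sigma))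
      *m (\sum_(q < n | q != k) blk L k q *m ((M + Delta) *m ev q))
   = (blk L k k)^T *m (M *m ev k))
  <->
  (Tblk Sigma gamma k k *m (Delta *m ev k)
   + \sum_(j in S | j != k) Tblk Sigma gamma k j *m (Delta *m ev j)
   = yvec Sigma gamma M k).
Proof.
move=> hS kS.
set A := blk L k k.
set B := 1%:M - _.
set mu := M *m ev k.
set u := \sum_(q < n | q != k) blk L k q *m (M *m ev q).
set v := \sum_(q < n | q != k) blk L k q *m (Delta *m ev q).
have ha : \sum_(q < n | q != k) blk L k q *m ((M + Delta) *m ev q) = u + v.
  by rewrite -big_split; apply: eq_bigr => q _; rewrite mulmxDl mulmxDr.
have hc : \sum_(j in S | j != k) Tblk Sigma gamma k j *m (Delta *m ev j) = B *m v.
  rewrite /v mulmx_sumr big_mkcond [RHS]big_mkcond; apply: eq_bigr => j _ /=.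
  case: (boolP (j \in S)) => jS /=; case: (boolP (j != k)) => hj //=.
    by rewrite /Tblk (negPf hj) !mulmxA.
  by rewrite hS // !mulmx0.
have hb : Tblk Sigma gamma k k = A^T + B *m A.
  rewrite /Tblk eqxx -/A /B mulmxBl mul1mx -scalemxAl.
  by apply/matrixP => i j; rewrite !mxE; ring.
have hy : yvec Sigma gamma M k = - (B *m (A *m mu + u)).
  by rewrite yvec_eq (bigD1 k) //=.
rewrite ha hc hy hb mulmxDl !mulmxDr !mulmxDl -!mulmxA.
apply: eq_shift; apply/matrixP => i j; rewrite !mxE; ring.
Qed.
End Main.

Theorem mainTheorem7 (R : realFieldType) (n : nat)
  (Sigma : 'M[R]_n) (gamma : 'I_n -> R) (M : 'M[R]_n) (S : {set 'I_n})
  (Delta : 'M[R]_n) :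
  Sigma^T = Sigma ->
  (forall x : 'cV[R]_n, x != 0 -> 0 < (x^T *m Sigma *m x) 0 0) ->
  (forall i, 0 < gamma i) ->
  (forall j, j \notin S -> Delta *m ev j = 0) ->
  (NashEq Sigma gamma M S Delta <->
   forall k, k \in S ->
     Tblk Sigma gamma k k *m (Delta *m ev k)
     + \sum_(j in S | j != k) Tblk Sigma gamma k j *m (Delta *m ev j)
     = yvec Sigma gamma M k).
Proof.
move=> HS HPD Hg hS; split.
  move=> [_ HN] k kS.
  apply: (@sys_equiv R n Sigma gamma M Delta S k hS kS).1.
  apply: (@agent_equiv R n Sigma gamma HS HPD Hg M (M + Delta) k).1; exact: HN.
move=> H; split => // k kS.
apply: (@agent_equiv R n Sigma gamma HS HPD Hg M (M + Delta) k).2.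
apply: (@sys_equiv R n Sigma gamma M Delta S k hS kS).2; exact: H.
Qed.
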